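(* Let $n\ge1$ and $g\in\mathcal G_n$. Then there are exactly $2^n$ uphills from $1$ to $g$, exactly $2^n$ downhills from $g$ to $1$, and exactly $2^{2n}$ mountains with peak $g$.
   Context: Let $X$ be a nonempty set and $X'=\{x':x\in X\}$ a disjoint copy of $X$; let $1$ be a new symbol and $A=X\cup X'\cup\{1\}$ (the anchors), with the involution $1'=1$, $(x)'=x'$, $(x')'=x$ for $x\in X$. For a 5-tuple $g$ write $g=(g^l,g^{la},g^c,g^{ra},g^r)$ (left entry, left anchor, middle entry, right anchor, right entry); the notation iterates, e.g. for $s\in\{l,r\}$, $g^{ls}$ is the $s$-entry of $g^l$ and $g^{lsa}$ is the $s$-anchor of $g^l$. Define $\mathcal G_0=\{1\}$; $\mathcal G_{1,e}=\{g_{xx'}:x\in X\}$ where $g_{xx'}=(1,1,xx',x',1)$ (the middle entry is a formal symbol), and $\mathcal G_{1,d}=\emptyset$. For $i\ge 2$: $\mathcal G_{i,e}=\{(g,(g^{la})',g^l,(g^{ra})',g),\ (g,(g^{ra})',g^l,(g^{la})',g) : g\in\mathcal G_{i-1,e}\}$, and $\mathcal G_{i,d}$ is the set of all $g\in\mathcal G_{i-1}\times A\times\mathcal G_{i-2}\times A\times\mathcal G_{i-1}$ such that $g^l\neq g^r$, $(g^c,g^{la})=(g^{ls},(g^{lsa})')$ for some $s\in\{l,r\}$, and $(g^c,g^{ra})=(g^{rt},(g^{rta})')$ for some $t\in\{l,r\}$; here $\mathcal G_i=\mathcal G_{i,d}\cup\mathcal G_{i,e}$ for $i\ge1$. Put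 $\mathcal G^5=\bigcup_{i\ge1}\mathcal G_i$, $\mathcal G=\mathcal G^5\cup A$, $\mathcal G'=\mathcal G^5\cup\{1\}$ (the symbol $1$ is used both as an anchor and as a letter of $\mathcal G'$). The height of $g\in\mathcal G_i$ is $i$; $1$ has height $0$. Words are elements of the free semigroup $\mathcal G^+$. A triplet $g_1ag_2$ with $g_1,g_2\in\mathcal G'$, $a\in A$ is left anchored if $g_2\in\mathcal G^5$ and $(g_1,a)=(g_2^s,g_2^{sa})$ for some $s\in\{l,r\}$, and right anchored if $g_1\in\mathcal G^5$ and $(g_2,a)=(g_1^s,(g_1^{sa})')$ for some $s\in\{l,r\}$; it is anchored if it is left or right anchored. An uphill from $h$ to $g$ is a word $g_0a_1g_1\cdots a_mg_m$ ($g_i\in\mathcal G'$, $a_i\in A$) with $g_0=h$, $g_m=g$, each $g_{i-1}a_ig_i$ anchored and height$(g_i)=$height$(g_{i-1})+1$ for all $i$; a downhill from $g$ to $h$ is defined the same way with height$(g_i)=$height$(g_{i-1})-1$. A mountain with peak $g$ (for $g\in\mathcal G^5$) is a word $u*v$ where $u$ is an uphill from $1$ to $g$ and $v$ is a downhill from $g$ to $1$, and $u*v$ denotes the concatenation of $u$ and $v$ with the common letter $g$ written only once. *)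

(* Defs.v *)
From Stdlib Require Import List Arith.
Import ListNotations.
Set Implicit Arguments.

Section Mountains.
Variable X : Type.

Inductive anchor : Type := AOne | AX (x : X) | AX' (x : X).

Definition ainv (a : anchor) : anchor :=
  match a with AOne => AOne | AX x => AX' x | AX' x => AX x end.

(* Raw terms: the symbol 1, the formal middle symbols xx', and 5-tuples
   (left entry, left anchor, middle entry, right anchor, right entry). *)
Inductive term : Type :=
| One
| Sym (x : X)                    (* the formal symbol xx' *)
| Tup (l : term) (la : anchor) (c : term) (ra : anchor) (r : term).

Definition gxx (x : X) : term := Tup One AOne (Sym x) (AX' x) One.

Definition side (s : bool) (t : term) : option (term * anchor) :=
  match t with
  | Tup l la _ ra r => Some (if s then (l, la) else (r, ra))
  | _ => None
  end.

Fixpoint Ge (i : nat) : term -> Prop :=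
  match i with
  | 0 => fun _ => False
  | S i' =>
    match i' with
    | 0 => fun t => exists x, t = gxx x
    | S _ => fun t => exists l la c ra r,
        Ge i' (Tup l la c ra r) /\
        (t = Tup (Tup l la c ra r) (ainv la) l (ainv ra) (Tup l la c ra r) \/
         t = Tup (Tup l la c ra r) (ainv ra) l (ainv la) (Tup l la c ra r))
    end
  end.

Fixpoint Gall (i : nat) : term -> Prop :=
  match i with
  | 0 => fun t => t = One
  | S i' =>
    match i' with
    | 0 => fun t => exists x, t = gxx x
    | S k => fun t =>
        Ge i t \/
        (exists l la c ra r, t = Tup l la c ra r /\
           Gall i' l /\ Gall k c /\ Gall i' r /\ l <> r /\
           (exists s e b, side s l = Some (e, b) /\ c = e /\ la = ainv b) /\
           (exists s e b, side s r = Some (e, b) /\ c = e /\ ra = ainv b))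
    end
  end.

Definition inG5 (t : term) : Prop := exists i, 1 <= i /\ Gall i t.
Definition inGp (t : term) : Prop := t = One \/ inG5 t.

Definition heightSucc (a b : term) : Prop := exists j, Gall j a /\ Gall (S j) b.

Definition leftAnchored (g1 : term) (a : anchor) (g2 : term) : Prop :=
  inG5 g2 /\ exists s, side s g2 = Some (g1, a).
Definition rightAnchored (g1 : term) (a : anchor) (g2 : term) : Prop :=
  inG5 g1 /\ exists s e b, side s g1 = Some (e, b) /\ g2 = e /\ a = ainv b.
Definition anchored g1 a g2 : Prop := leftAnchored g1 a g2 \/ rightAnchored g1 a g2.

(* Letters of G = G^5 ∪ A; the letter 1 of G' is the anchor 1. *)
Inductive letter : Type := LA (a : anchor) | LT (t : term).

Definition encG (t : term) : letter :=
  match t with One => LA AOne | _ => LT t end.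

(* the word g0 a1 g1 ... am gm *)
Definition wordOf (g0 : term) (st : list (anchor * term)) : list letter :=
  encG g0 :: flat_map (fun p => [LA (fst p); encG (snd p)]) st.

Definition lastT (g0 : term) (st : list (anchor * term)) : term :=
  snd (last st (AOne, g0)).

Fixpoint chainOK (up : bool) (prev : term) (st : list (anchor * term)) : Prop :=
  match st with
  | [] => True
  | (a, t) :: st' =>
      inGp t /\ anchored prev a t /\
      (if up then heightSucc prev t else heightSucc t prev) /\
      chainOK up t st'
  end.

Definition isHill (up : bool) (h g : term) (w : list letter) : Prop :=
  exists g0 st, w = wordOf g0 st /\ g0 = h /\ inGp g0 /\
                lastT g0 st = g /\ chainOK up g0 st.

Definition isUphill := isHill true.
Definition isDownhill := isHill false.

(* u * v : concatenation with the common letter g written once *)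
Definition isMountain (g : term) (w : list letter) : Prop :=
  inG5 g /\ exists u v, isUphill One g u /\ isDownhill g One v /\ w = u ++ tl v.

Definition hasCard (P : list letter -> Prop) (k : nat) : Prop :=
  exists l : list (list letter), NoDup l /\ length l = k /\ forall w, In w l <-> P w.

End Mountains.

(* Main.v *)
Require Import Defs.
From Stdlib Require Import List Arith Lia.
Import ListNotations.
Set Implicit Arguments.
Unset Strict Implicit.

Section Pf.
Variable X : Type.
Notation T := (term X).

Fixpoint ld (t : T) : nat := match t with Tup l _ _ _ _ => S (ld l) | _ => 0 end.

Lemma ainvK (a : anchor X) : ainv (ainv a) = a.
Proof. destruct a; reflexivity. Qed.

Lemma ainv_inj (a b : anchor X) : ainv a = ainv b -> a = b.
Proof. intro H. rewrite <- (ainvK a), <- (ainvK b), H. reflexivity. Qed.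

Lemma Ge_ld : forall i (t : T), Ge i t -> ld t = i.
Proof.
  induction i as [|i IH]; intros t H; [destruct H|]. destruct i as [|i].
  - destruct H as [x ->]; reflexivity.
  - destruct H as (l&la&c&ra&r&HG&[-> | ->]); apply IH in HG; simpl in *; congruence.
Qed.

Lemma Gall_ld2 : forall i, (forall t : T, Gall i t -> ld t = i) /\ (forall t : T, Gall (S i) t -> ld t = S i).
Proof.
  induction i as [|i [IH1 IH2]].
  - split; intros t H; simpl in H. subst; reflexivity. destruct H as [x ->]; reflexivity.
  - split; [exact IH2|]. intros t H. destruct H as [H|H].
    + apply Ge_ld; exact H.
    + destruct H as (l&la&c&ra&r&->&Hl&_). simpl. rewrite (IH2 _ Hl). reflexivity.
Qed.

Lemma Gall_ld i (t : T) : Gall i t -> ld t = i.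
Proof. apply (proj1 (Gall_ld2 i)). Qed.

Lemma Gall_uniq i j (t : T) : Gall i t -> Gall j t -> i = j.
Proof. intros H1 H2. rewrite <- (Gall_ld H1), <- (Gall_ld H2). reflexivity. Qed.

Lemma Ge_anch : forall i (l : T) la c ra r, Ge (S i) (Tup l la c ra r) -> la <> ra.
Proof.
  induction i as [|i IH]; intros l la c ra r H.
  - destruct H as [x H]. unfold gxx in H. injection H; intros; subst; discriminate.
  - destruct H as (l'&la'&c'&ra'&r'&HG&[H|H]); injection H; intros; subst;
      apply IH in HG; intro E; apply ainv_inj in E; auto.
Qed.

Lemma Ge_Gall : forall i (t : T), Ge (S i) t -> Gall (S i) t.
Proof. intros [|i] t H. exact H. left; exact H. Qed.

Lemma Gall_S : forall i (t : T), Gall (S i) t -> exists l la c ra r,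
  t = Tup l la c ra r /\ Gall i l /\ Gall i r /\ (l, la) <> (r, ra).
Proof.
  intros [|k] t H.
  - destruct H as [x ->]. exists (One X), (AOne X), (Sym x), (AX' x), (One X).
    split; [reflexivity|]. split; [reflexivity|]. split; [reflexivity|].
    intro E; injection E; intros; discriminate.
  - destruct H as [H|H].
    + pose proof H as H0.
      destruct H as (l&la&c&ra&r&HG&[-> | ->]).
      * exists (Tup l la c ra r), (ainv la), l, (ainv ra), (Tup l la c ra r).
        split; [reflexivity|]. split; [apply Ge_Gall; exact HG|]. split; [apply Ge_Gall; exact HG|].
        intro E; injection E; intro E'; apply ainv_inj in E'. apply Ge_anch in HG. auto.
      * exists (Tup l la c ra r), (ainv ra), l, (ainv la), (Tup l la c ra r).
        split; [reflexivity|]. split; [apply Ge_Gall; exact HG|]. split; [apply Ge_Gall; exact HG|].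
        intro E; injection E; intro E'; apply ainv_inj in E'. apply Ge_anch in HG. auto.
    + destruct H as (l&la&c&ra&r&->&Hl&Hc&Hr&Hne&_).
      exists l, la, c, ra, r. repeat split; auto. intro E; injection E; intros; auto.
Qed.

Lemma Gall_S_One i : ~ Gall (S i) (One X).
Proof. intro H. destruct (Gall_S H) as (l&la&c&ra&r&E&_). discriminate. Qed.

Lemma Gall_inGp i (t : T) : Gall i t -> inGp t.
Proof. destruct i; intro H. left; exact H. right; exists (S i); split; [lia|exact H]. Qed.

Lemma entry_lower j (p : T) s e b : Gall j p -> side s p = Some (e, b) ->
  exists j', j = S j' /\ Gall j' e.
Proof.
  intros H Hs. destruct p as [| |pl pla pc pra pr]; try discriminate.
  destruct j as [|j]. { simpl in H. discriminate. }
  destruct (Gall_S H) as (l&la&c&ra&r&E&Hl&Hr&_). injection E; intros; subst.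
  exists j; split; [reflexivity|]. destruct s; simpl in Hs; injection Hs; intros; subst; auto.
Qed.

Lemma encG_inj (a b : T) : encG a = encG b -> a = b.
Proof. destruct a, b; simpl; intro H; try discriminate; congruence. Qed.

Lemma last_indep {A} (l : list A) x d1 d2 : last (x :: l) d1 = last (x :: l) d2.
Proof. revert x; induction l as [|a l IH]; intros x; [reflexivity|].
  change (last (a :: l) d1 = last (a :: l) d2). apply IH. Qed.

Lemma lastT_cons (g : T) a t st : lastT g ((a, t) :: st) = lastT t st.
Proof. unfold lastT. destruct st as [|p st]. reflexivity.
  change (snd (last (p :: st) (AOne X, g)) = snd (last (p :: st) (AOne X, t))).
  rewrite (last_indep st p _ (AOne X, t)). reflexivity. Qed.

Lemma lastT_app (g : T) a t st : lastT g (st ++ [(a, t)]) = t.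
Proof. unfold lastT. rewrite last_last. reflexivity. Qed.

Lemma wordOf_app (g : T) a t st : wordOf g (st ++ [(a, t)]) = wordOf g st ++ [LA a; encG t].
Proof. unfold wordOf. rewrite flat_map_app. simpl. reflexivity. Qed.

Lemma chainOK_app up : forall st (prev : T) a t, chainOK up prev (st ++ [(a, t)]) <->
  chainOK up prev st /\ inGp t /\ anchored (lastT prev st) a t /\
  (if up then heightSucc (lastT prev st) t else heightSucc t (lastT prev st)).
Proof.
  induction st as [|[a' t'] st IH]; intros prev a t.
  - simpl. unfold lastT; simpl. tauto.
  - simpl. rewrite IH, lastT_cons. tauto.
Qed.

Fixpoint upL (n : nat) (g : T) : list (list (letter X)) :=
  match n with
  | 0 => [[encG g]]
  | S m => match g with
           | Tup l la c ra r => map (fun w => w ++ [LA la; encG g]) (upL m l) ++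
                                map (fun w => w ++ [LA ra; encG g]) (upL m r)
           | _ => []
           end
  end.

Fixpoint downL (n : nat) (g : T) : list (list (letter X)) :=
  match n with
  | 0 => [[encG g]]
  | S m => match g with
           | Tup l la c ra r => map (fun w => encG g :: LA (ainv la) :: w) (downL m l) ++
                                map (fun w => encG g :: LA (ainv ra) :: w) (downL m r)
           | _ => []
           end
  end.

Lemma up_sound : forall n (g : T) w, Gall n g -> In w (upL n g) ->
  exists st, w = wordOf (One X) st /\ lastT (One X) st = g /\ chainOK true (One X) st.
Proof.
  induction n as [|n IH]; intros g w Hg Hin.
  - simpl in Hin. destruct Hin as [<-|[]]. simpl in Hg. subst.
    exists []. split; [reflexivity|]. split; [reflexivity|exact I].
  - pose proof Hg as Hg0.
    destruct (Gall_S Hg) as (l&la&c&ra&r&->&Hl&Hr&_).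
    cbn [upL] in Hin. apply in_app_or in Hin.
    destruct Hin as [Hin|Hin]; apply in_map_iff in Hin; destruct Hin as (w'&<-&Hin).
    + destruct (IH _ _ Hl Hin) as (st&->&Hlast&Hch).
      exists (st ++ [(la, Tup l la c ra r)]). rewrite wordOf_app, lastT_app.
      split; [reflexivity|]. split; [reflexivity|]. apply chainOK_app. rewrite Hlast.
      split; [exact Hch|]. split; [eapply Gall_inGp; exact Hg0|]. split.
      * left. split. exists (S n); split; [lia|exact Hg0]. exists true; reflexivity.
      * exists n; split; assumption.
    + destruct (IH _ _ Hr Hin) as (st&->&Hlast&Hch).
      exists (st ++ [(ra, Tup l la c ra r)]). rewrite wordOf_app, lastT_app.
      split; [reflexivity|]. split; [reflexivity|]. apply chainOK_app. rewrite Hlast.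
      split; [exact Hch|]. split; [eapply Gall_inGp; exact Hg0|]. split.
      * left. split. exists (S n); split; [lia|exact Hg0]. exists false; reflexivity.
      * exists n; split; assumption.
Qed.

Lemma up_complete : forall n (g : T) st, Gall n g -> lastT (One X) st = g ->
  chainOK true (One X) st -> In (wordOf (One X) st) (upL n g).
Proof.
  induction n as [|m IH]; intros g st Hg Hl Hc;
    induction st as [|[a t] st' _] using rev_ind.
  - simpl in Hg. subst. simpl. left. reflexivity.
  - rewrite lastT_app in Hl. apply chainOK_app in Hc.
    destruct Hc as (_&_&_&j&_&Hj). simpl in Hg. subst. exfalso; eapply Gall_S_One; exact Hj.
  - unfold lastT in Hl; simpl in Hl. subst. exfalso; eapply Gall_S_One; exact Hg.
  - rewrite lastT_app in Hl. subst t. apply chainOK_app in Hc.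
    destruct Hc as (Hc&_&Han&j&Hj1&Hj2).
    assert (j = m) by (pose proof (Gall_uniq Hj2 Hg); lia). subst j.
    destruct (Gall_S Hg) as (l&la&c&ra&r&->&Hl&Hr&_).
    rewrite wordOf_app. cbn [upL].
    destruct Han as [[_ [s Hs]] | [_ (s&e&b&Hs&He&Hb)]].
    + destruct s; simpl in Hs; injection Hs; intros; subst.
      * apply in_or_app; left. apply in_map_iff. eexists; split; [reflexivity|].
        apply IH; auto; congruence.
      * apply in_or_app; right. apply in_map_iff. eexists; split; [reflexivity|].
        apply IH; auto; congruence.
    + exfalso. destruct (entry_lower Hj1 Hs) as (j'&Ej&Hj'). subst e.
      pose proof (Gall_uniq Hj' Hg). lia.
Qed.

Lemma down_sound : forall n (g : T) w, Gall n g -> In w (downL n g) ->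
  exists st, w = wordOf g st /\ lastT g st = One X /\ chainOK false g st.
Proof.
  induction n as [|n IH]; intros g w Hg Hin.
  - simpl in Hin. destruct Hin as [<-|[]]. simpl in Hg. subst.
    exists []. split; [reflexivity|]. split; [reflexivity|exact I].
  - pose proof Hg as Hg0.
    destruct (Gall_S Hg) as (l&la&c&ra&r&->&Hl&Hr&_).
    cbn [downL] in Hin. apply in_app_or in Hin.
    destruct Hin as [Hin|Hin]; apply in_map_iff in Hin; destruct Hin as (w'&<-&Hin).
    + destruct (IH _ _ Hl Hin) as (st&->&Hlast&Hch).
      exists ((ainv la, l) :: st). rewrite lastT_cons.
      split; [reflexivity|]. split; [exact Hlast|]. simpl.
      split; [eapply Gall_inGp; exact Hl|]. split.
      * right. split. exists (S n); split; [lia|exact Hg0]. exists true, l, la. auto.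
      * split; [exists n; split; assumption| exact Hch].
    + destruct (IH _ _ Hr Hin) as (st&->&Hlast&Hch).
      exists ((ainv ra, r) :: st). rewrite lastT_cons.
      split; [reflexivity|]. split; [exact Hlast|]. simpl.
      split; [eapply Gall_inGp; exact Hr|]. split.
      * right. split. exists (S n); split; [lia|exact Hg0]. exists false, r, ra. auto.
      * split; [exists n; split; assumption| exact Hch].
Qed.

Lemma down_complete : forall n (g : T) st, Gall n g -> lastT g st = One X ->
  chainOK false g st -> In (wordOf g st) (downL n g).
Proof.
  induction n as [|m IH]; intros g st Hg Hl Hc; destruct st as [|[a t] st'].
  - simpl in Hg. subst. simpl. left. reflexivity.
  - simpl in Hg. subst. destruct Hc as (_&_&(j&_&Hj)&_). exfalso; eapply Gall_S_One; exact Hj.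
  - unfold lastT in Hl; simpl in Hl. subst. exfalso; eapply Gall_S_One; exact Hg.
  - rewrite lastT_cons in Hl. destruct Hc as (_&Han&(j&Hj1&Hj2)&Hc).
    assert (j = m) by (pose proof (Gall_uniq Hj2 Hg); lia). subst j.
    destruct Han as [[_ [s Hs]] | [_ (s&e&b&Hs&He&Hb)]].
    + exfalso. destruct (entry_lower Hj1 Hs) as (j'&Ej&Hj'). subst m.
      pose proof (Gall_uniq Hj' Hg). lia.
    + destruct (Gall_S Hg) as (l&la&c&ra&r&->&Hl'&Hr&_).
      cbn [downL]. subst.
      destruct s; simpl in Hs; injection Hs; intros; subst.
      * apply in_or_app; left. apply in_map_iff. eexists; split; [reflexivity|]. apply IH; auto.
      * apply in_or_app; right. apply in_map_iff. eexists; split; [reflexivity|]. apply IH; auto.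
Qed.

Lemma up_last : forall n (g : T) w, In w (upL n g) -> exists w', w = w' ++ [encG g].
Proof.
  induction n; intros g w H.
  - simpl in H. destruct H as [<-|[]]. exists []. reflexivity.
  - destruct g; simpl in H; try contradiction.
    apply in_app_or in H. destruct H as [H|H]; apply in_map_iff in H; destruct H as (w0&<-&_);
      match goal with |- exists _, _ ++ [?x; ?y] = _ => exists (w0 ++ [x]) end; rewrite <- app_assoc; reflexivity.
Qed.

Lemma up_len : forall n (g : T) w, In w (upL n g) -> length w = 2 * n + 1.
Proof.
  induction n; intros g w H.
  - simpl in H. destruct H as [<-|[]]. reflexivity.
  - destruct g; simpl in H; try contradiction.
    apply in_app_or in H. destruct H as [H|H]; apply in_map_iff in H; destruct H as (w0&<-&H);
      apply IHn in H; rewrite length_app; simpl; lia.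
Qed.

Lemma down_head : forall n (g : T) w, In w (downL n g) -> exists w', w = encG g :: w'.
Proof.
  induction n; intros g w H.
  - simpl in H. destruct H as [<-|[]]. exists []. reflexivity.
  - destruct g; simpl in H; try contradiction.
    apply in_app_or in H. destruct H as [H|H]; apply in_map_iff in H; destruct H as (w0&<-&_);
      eexists; reflexivity.
Qed.

Lemma NoDup_map_in {A B} (f : A -> B) l : NoDup l ->
  (forall x y, In x l -> In y l -> f x = f y -> x = y) -> NoDup (map f l).
Proof.
  induction l as [|a l IH]; intros Hn Hi; simpl. constructor.
  inversion Hn; subst. constructor.
  - intro Hin. apply in_map_iff in Hin. destruct Hin as (y&Hy&Hin).
    assert (y = a) by (apply Hi; simpl; auto). subst. contradiction.
  - apply IH; auto. intros; apply Hi; simpl; auto.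
Qed.

Lemma up_nodup : forall n (g : T), Gall n g -> NoDup (upL n g).
Proof.
  induction n as [|n IH]; intros g Hg.
  - simpl. constructor; [intros []|constructor].
  - destruct (Gall_S Hg) as (l&la&c&ra&r&->&Hl&Hr&Hne).
    cbn [upL]. apply NoDup_app.
    + apply NoDup_map_in; auto. intros x y _ _ E. eapply app_inv_tail; exact E.
    + apply NoDup_map_in; auto. intros x y _ _ E. eapply app_inv_tail; exact E.
    + intros w H1 H2. apply in_map_iff in H1, H2.
      destruct H1 as (w1&E1&H1). destruct H2 as (w2&E2&H2). rewrite <- E2 in E1.
      assert (Ha : forall (l0 : list (letter X)) x y, l0 ++ [x; y] = (l0 ++ [x]) ++ [y])
        by (intros; rewrite <- app_assoc; reflexivity).
      rewrite !Ha in E1.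
      apply app_inj_tail in E1. destruct E1 as [E1 _]. apply app_inj_tail in E1.
      destruct E1 as [E1 E3]. injection E3; intro; subst.
      destruct (up_last H1) as (u1&->). destruct (up_last H2) as (u2&E4).
      apply app_inj_tail in E4. destruct E4 as [_ E4]. apply encG_inj in E4. subst.
      apply Hne; reflexivity.
Qed.

Lemma down_nodup : forall n (g : T), Gall n g -> NoDup (downL n g).
Proof.
  induction n as [|n IH]; intros g Hg.
  - simpl. constructor; [intros []|constructor].
  - destruct (Gall_S Hg) as (l&la&c&ra&r&->&Hl&Hr&Hne).
    cbn [downL]. apply NoDup_app.
    + apply NoDup_map_in; auto. intros x y _ _ E. injection E; auto.
    + apply NoDup_map_in; auto. intros x y _ _ E. injection E; auto.
    + intros w H1 H2. apply in_map_iff in H1, H2.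
      destruct H1 as (w1&E1&H1). destruct H2 as (w2&E2&H2). rewrite <- E2 in E1.
      injection E1; intros E3 E4. apply ainv_inj in E4. subst.
      destruct (down_head H1) as (u1&->). destruct (down_head H2) as (u2&E5).
      injection E5; intros _ E6. apply encG_inj in E6. subst. apply Hne; reflexivity.
Qed.

Lemma up_length : forall n (g : T), Gall n g -> length (upL n g) = 2 ^ n.
Proof.
  induction n as [|n IH]; intros g Hg. reflexivity.
  destruct (Gall_S Hg) as (l&la&c&ra&r&->&Hl&Hr&_). cbn [upL].
  rewrite length_app, !length_map, (IH _ Hl), (IH _ Hr). simpl. lia.
Qed.

Lemma down_length : forall n (g : T), Gall n g -> length (downL n g) = 2 ^ n.
Proof.
  induction n as [|n IH]; intros g Hg. reflexivity.
  destruct (Gall_S Hg) as (l&la&c&ra&r&->&Hl&Hr&_). cbn [downL].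
  rewrite length_app, !length_map, (IH _ Hl), (IH _ Hr). simpl. lia.
Qed.

Lemma app_eq_len {A} : forall (u1 u2 x1 x2 : list A), length u1 = length u2 ->
  u1 ++ x1 = u2 ++ x2 -> u1 = u2 /\ x1 = x2.
Proof.
  induction u1 as [|a u1 IH]; intros [|b u2] x1 x2 Hl E; simpl in *; try discriminate; auto.
  injection E; intros E1 E2. subst. destruct (IH u2 x1 x2) as [-> ->]; auto.
Qed.

Lemma flat_map_len {A B} (f : A -> list B) k : forall l, (forall a, In a l -> length (f a) = k) ->
  length (flat_map f l) = k * length l.
Proof.
  induction l as [|a l IH]; intro H; simpl. lia.
  rewrite length_app, H, IH. simpl. lia.
  intros; apply H; simpl; auto. simpl; auto.
Qed.

Definition mountL n (g : T) := flat_map (fun u => map (fun v => u ++ tl v) (downL n g)) (upL n g).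

End Pf.

Theorem lemma4p3 (X : Type) (HX : inhabited X) (n : nat) (g : term X) :
  1 <= n -> Gall n g ->
  hasCard (@isUphill X (One X) g) (2 ^ n) /\
  hasCard (@isDownhill X g (One X)) (2 ^ n) /\
  hasCard (@isMountain X g) (2 ^ (2 * n)).
Proof.
  intros Hn Hg.
  assert (HU : forall w, In w (upL n g) <-> isUphill (One X) g w).
  { intro w; split.
    - intro H. destruct (up_sound Hg H) as (st&->&Hl&Hc).
      exists (One X), st. repeat split; auto. left; reflexivity.
    - intros (g0&st&->&->&_&Hl&Hc). apply up_complete; auto. }
  assert (HD : forall w, In w (downL n g) <-> isDownhill g (One X) w).
  { intro w; split.
    - intro H. destruct (down_sound Hg H) as (st&->&Hl&Hc).
      exists g, st. repeat split; auto. eapply Gall_inGp; exact Hg.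
    - intros (g0&st&->&->&_&Hl&Hc). apply down_complete; auto. }
  split; [|split].
  - exists (upL n g). split; [apply up_nodup; auto|]. split; [apply up_length; auto|]. exact HU.
  - exists (downL n g). split; [apply down_nodup; auto|]. split; [apply down_length; auto|]. exact HD.
  - exists (mountL n g). split; [|split].
    + unfold mountL. pose proof (up_nodup Hg) as N1. pose proof (down_nodup Hg) as N2.
      assert (Hsub : forall u, In u (upL n g) -> True) by auto.
      revert N1. generalize (@up_len X n g). generalize (upL n g).
      induction l as [|u l IH]; intros Hlen N1; simpl. constructor.
      inversion N1; subst. apply NoDup_app.
      * apply NoDup_map_in; auto. intros x y Hx Hy E. apply app_inv_head in E.
        destruct (down_head Hx) as (x'&->). destruct (down_head Hy) as (y'&->).
        simpl in E; subst; reflexivity.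
      * apply IH; auto. intros; apply Hlen; simpl; auto.
      * intros w M1 M2. apply in_map_iff in M1. destruct M1 as (v&<-&_).
        apply in_flat_map in M2. destruct M2 as (u'&Hu'&M2). apply in_map_iff in M2.
        destruct M2 as (v'&E&_). apply app_eq_len in E.
        -- destruct E as [-> _]. contradiction.
        -- rewrite (Hlen u'), (Hlen u); simpl; auto.
    + unfold mountL. rewrite (flat_map_len (k:=2 ^ n)).
      * rewrite (up_length Hg). replace (2 * n) with (n + n) by lia. rewrite Nat.pow_add_r. reflexivity.
      * intros a _. rewrite length_map. apply down_length; auto.
    + intro w. unfold mountL. rewrite in_flat_map. split.
      * intros (u&Hu&Hw). apply in_map_iff in Hw. destruct Hw as (v&<-&Hv).
        split. exists n; auto. exists u, v. split; [apply HU; auto|]. split; [apply HD; auto|reflexivity].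
      * intros (_&u&v&Hu&Hv&->). exists u. split; [apply HU; auto|].
        apply in_map_iff. exists v. split; [reflexivity| apply HD; auto].
Qed.
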